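(* Let $X$ be an affine variety and $\mathcal E\subseteq\operatorname{End}(X)$ a closed semi-subgroup. If $Y\subset X$ is a closed $\mathcal E$-stable subvariety, then $Y$ is $\mathcal D_{\mathcal E}$-invariant.
   Context: $\Bbbk$ is algebraically closed of characteristic $0$. Vector fields on $X$ are derivations of $\mathcal O(X)$, with values $\xi(x)\in T_xX$. $\operatorname{End}(X)$, the semigroup of morphisms $X\to X$, is an affine ind-variety (increasing union of closed affine subvarieties) and an ind-semigroup under composition. For a closed semi-subgroup $\mathcal E$ (containing $\mathrm{id}_X$), $T_{\mathrm{id}}\mathcal E$ is its Zariski tangent space at $\mathrm{id}$; for $x\in X$ let $\mu_x\colon\mathcal E\to X$, $\phi\mapsto\phi(x)$, and for $A\in T_{\mathrm{id}}\mathcal E$ let $\xi_A(x)=(d\mu_x)_{\mathrm{id}}(A)$; $\mathcal D_{\mathcal E}=\{\xi_A\mid A\in T_{\mathrm{id}}\mathcal E\}$. $Y$ is $\mathcal E$-stable if $\phi(Y)\subset Y$ for all $\phi\in\mathcal E$, and $\mathcal D_{\mathcal E}$-invariant if $\xi(y)\in T_yY$ for all $y\in Y$, $\xi\in\mathcal D_{\mathcal E}$. *)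

(* Defs.v *)
From HB Require Import structures.
From mathcomp Require Import all_boot all_order all_algebra.
From mathcomp Require Import mpoly.
Set Implicit Arguments. Unset Strict Implicit. Unset Printing Implicit Defensive.
Import GRing.Theory.
Local Open Scope ring_scope.

Definition point (k : fieldType) (n : nat) := 'I_n -> k.

Definition vanishes_on (k : fieldType) (n : nat) (Z : point k n -> Prop)
  (f : {mpoly k[n]}) : Prop :=
  forall z, Z z -> meval z f = 0.

Definition zclosed (k : fieldType) (n : nat) (Z : point k n -> Prop) : Prop :=
  forall x : point k n, (forall f, vanishes_on Z f -> meval x f = 0) -> Z x.

Definition tangent_space (k : fieldType) (n : nat) (Z : point k n -> Prop)
  (z : point k n) (v : point k n) : Prop :=
  forall f, vanishes_on Z f -> \sum_(i < n) meval z (mderiv i f) * v i = 0.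

Definition differential (k : fieldType) (N n : nat) (P : 'I_n -> {mpoly k[N]})
  (p v : point k N) : point k n :=
  fun i => \sum_(j < N) meval p (mderiv j (P i)) * v j.

Definition polymap (k : fieldType) (n : nat) := 'I_n -> {mpoly k[n]}.

Definition apply_map (k : fieldType) (n : nat) (F : polymap k n) (x : point k n)
  : point k n := fun i => meval x (F i).

Definition id_map (k : fieldType) (n : nat) : polymap k n :=
  fun i => @mpolyX n k (mnm1 i).

Definition comp_map (k : fieldType) (n : nat) (F G : polymap k n) : polymap k n :=
  fun i => comp_mpoly [tuple G j | j < n] (F i).

Definition maps_into (k : fieldType) (n : nat) (X : point k n -> Prop)
  (F : polymap k n) : Prop :=
  forall x, X x -> X (apply_map F x).

Definition same_on (k : fieldType) (n : nat) (X : point k n -> Prop)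
  (F G : polymap k n) : Prop :=
  forall x, X x -> apply_map F x = apply_map G x.

(* The d-th filtration piece: polynomial maps of total degree <= d, with
   coordinates the coefficients c(i,m), i < n, m a monomial of degree <= d. *)
Definition cdim (n d : nat) : nat := #|{: ('I_n * 'X_{1..n < d.+1})%type}|.

Definition coef_map (k : fieldType) (n d : nat) (c : point k (cdim n d))
  : polymap k n :=
  fun i => \sum_(m : 'X_{1..n < d.+1})
             c (enum_rank (i, m)) *: @mpolyX n k (bmnm m).

(* For x in k^n, the evaluation map mu_x : phi |-> phi(x), restricted to the
   d-th filtration piece, as a polynomial map k^(cdim n d) -> k^n. *)
Definition mu_poly (k : fieldType) (n d : nat) (x : point k n)
  : 'I_n -> {mpoly k[cdim n d]} :=
  fun i => \sum_(m : 'X_{1..n < d.+1})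
             meval x (@mpolyX n k (bmnm m)) *: @mpolyX (cdim n d) k (mnm1 (enum_rank (i, m))).

(* A closed semi-subgroup E of End(X) (given by the set of all polynomial
   tuples representing its elements). *)
Definition closed_semisubgroup (k : fieldType) (n : nat)
  (X : point k n -> Prop) (E : polymap k n -> Prop) : Prop :=
  [/\ (forall F, E F -> maps_into X F),
      (forall F G, E F -> same_on X F G -> E G),
      E (@id_map k n),
      (forall F G, E F -> E G -> E (comp_map F G)) &
      (forall d, zclosed (fun c : point k (cdim n d) => E (coef_map c)))].

Definition E_piece (k : fieldType) (n : nat) (E : polymap k n -> Prop) (d : nat)
  : point k (cdim n d) -> Prop := fun c => E (coef_map c).

(* The vector field xi_A for A in T_id E: A is a tangent vector at (a
   representative c0 of) id to some E_d, and xi_A(x) = (d mu_x)_id (A). *)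
Definition in_D_E (k : fieldType) (n : nat) (E : polymap k n -> Prop)
  (xi : point k n -> point k n) : Prop :=
  exists d (c0 A : point k (cdim n d)),
    [/\ (forall i, coef_map c0 i = @id_map k n i),
        tangent_space (@E_piece k n E d) c0 A &
        forall x, xi x = differential (@mu_poly k n d x) c0 A].

Definition E_stable (k : fieldType) (n : nat) (E : polymap k n -> Prop)
  (Y : point k n -> Prop) : Prop :=
  forall F, E F -> forall y, Y y -> Y (apply_map F y).

Definition D_E_invariant (k : fieldType) (n : nat) (E : polymap k n -> Prop)
  (Y : point k n -> Prop) : Prop :=
  forall xi, in_D_E E xi -> forall y, Y y -> tangent_space Y y (xi y).

(* Main.v *)
Require Import Defs.
From Stdlib Require Import FunctionalExtensionality.
From HB Require Import structures.
From mathcomp Require Import all_boot all_order all_algebra.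
From mathcomp Require Import ring.
From mathcomp Require Import mpoly.
Set Implicit Arguments. Unset Strict Implicit. Unset Printing Implicit Defensive.
Import GRing.Theory.
Local Open Scope ring_scope.
Lemma mderivXU (R : comRingType) (n : nat) (i l : 'I_n) :
  mderiv i ('X_l : {mpoly R[n]}) = (l == i)%:R.
Proof.
rewrite mderivX mnm1E; case: eqP => [->|_]; last by rewrite scale0r.
have -> : (U_(i) - U_(i) = 0)%MM by apply/mnmP=> j; rewrite !mnmE subnn.
by rewrite mpolyX0 scale1r.
Qed.

Lemma chain_rule (R : comRingType) (N n : nat) (P : 'I_n -> {mpoly R[N]})
  (f : {mpoly R[n]}) (j : 'I_N) :
  mderiv j (f \mPo [tuple P i | i < n]) =
  \sum_(i < n) (mderiv i f \mPo [tuple P i | i < n]) * mderiv j (P i).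
Proof.
set lq := [tuple P i | i < n].
pose S (f : {mpoly R[n]}) := mderiv j (f \mPo lq) =
  \sum_(i < n) (mderiv i f \mPo lq) * mderiv j (P i).
have SD p q : S p -> S q -> S (p + q).
  rewrite /S => Hp Hq; rewrite comp_mpolyD mderivD Hp Hq -big_split /=.
  by apply: eq_bigr => i _; rewrite mderivD comp_mpolyD mulrDl.
have SZ c p : S p -> S (c *: p).
  rewrite /S => Hp; rewrite comp_mpolyZ mderivZ Hp scaler_sumr.
  by apply: eq_bigr => i _; rewrite mderivZ comp_mpolyZ scalerAl.
have SM p q : S p -> S q -> S (p * q).
  rewrite /S => Hp Hq; rewrite rmorphM /= mderivM Hp Hq.
  rewrite mulr_suml mulr_sumr -big_split /=.
  apply: eq_bigr => i _; rewrite mderivM comp_mpolyD !rmorphM /=.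
  by ring.
have S1 : S 1.
  rewrite /S comp_mpoly1 -mpolyC1 mderivC big1 // => i _.
  by rewrite mderivC comp_mpolyC mpolyC0 mul0r.
have SX l : S 'X_l.
  rewrite /S comp_mpolyXU -tnth_nth tnth_mktuple (bigD1 l) //= big1 ?addr0.
    by rewrite mderivXU eqxx comp_mpoly1 mul1r.
  by move=> i /negbTE; rewrite mderivXU eq_sym => ->; rewrite comp_mpoly0 mul0r.
have SXm m : S 'X_[m].
  rewrite mpolyXE_id; apply: (big_ind S) => // i _.
  elim: (m i) => [|e IH]; first by rewrite expr0.
  by rewrite exprS; apply: SM.
elim/mpolyind: f => [|c m p _ _ Hp].
  by rewrite /S comp_mpoly0 mderiv0 big1 // => i _; rewrite mderiv0 comp_mpoly0 mul0r.
by apply: SD => //; apply: SZ.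
Qed.

Lemma meval_mu (k : fieldType) (n d : nat) (y : point k n) (c : point k (cdim n d)) i :
  meval c (@mu_poly k n d y i) = meval y (Defs.coef_map c i).
Proof.
rewrite /mu_poly /Defs.coef_map !raddf_sum /=; apply: eq_bigr => m _.
by rewrite !mevalZ mevalXU mulrC.
Qed.

Local Close Scope ring_scope.

Theorem proposition3p1p2 (k : closedFieldType) (char0 : [pchar k]%R =i pred0)
  (n : nat) (X : point k n -> Prop) (E : polymap k n -> Prop)
  (Y : point k n -> Prop) :
  zclosed X -> closed_semisubgroup X E ->
  zclosed Y -> (forall y, Y y -> X y) -> E_stable E Y ->
  D_E_invariant E Y.
Proof.
move=> HX Hsg HY HYX Hst xi [d [c0 [A [Hc0 HT Hxi]]]] y Yy f Hf.
rewrite Hxi /differential.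
set lq := [tuple @mu_poly k n d y i | i < n].
have Hev c h : meval c (h \mPo lq) = meval (apply_map (Defs.coef_map c) y) h.
  rewrite comp_mpoly_meval; apply: meval_eq => i.
  by rewrite tnth_mktuple meval_mu.
have Hy : apply_map (Defs.coef_map c0) y = y.
  by apply: functional_extensionality => i; rewrite /apply_map Hc0 /id_map mevalXU.
have Hg : vanishes_on (@E_piece k n E d) (f \mPo lq).
  by move=> c Ec; rewrite Hev; apply: Hf; apply: Hst.
apply: (etrans _ (HT _ Hg)).
under [RHS]eq_bigr => j _ do rewrite chain_rule raddf_sum /= mulr_suml.
rewrite [RHS]exchange_big /=.
apply: eq_bigr => i _; rewrite mulr_sumr; apply: eq_bigr => j _.
by rewrite mevalM -/lq Hev Hy mulrA.
Qed.
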